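(* Consider the post-withdrawal-lock phase of the following crowdsale protocol, run in discrete blocks $s = t, t+1, \dots, u$. At every moment the state is a finite set of \emph{active} bids, each bid $A$ having a current amount $v(A) > 0$ and a personal cap $c(A) > 0$; the \emph{valuation} is $V = \sum_{A \text{ active}} v(A)$ (with $V = 0$ if there are no active bids). The set of active bids present at the start of block $t$ is arbitrary (any finite set of bids with positive amounts and positive caps). In each block $s$ with $t \le s \le u$ the protocol performs: Step 1 (receive bids): any finite number of new bids arrive one after another; each new bid $A$ has an amount $v(A) > 0$ and a cap $c(A)$ satisfying $c(A) > V$, where $V$ is the valuation at the moment of its arrival; it is then added to the active set. Step 3 (automatic withdrawals): while there is an active bid $B$ with $V > c(B)$, repeat: let $m = \min\{c(A) : A \text{ active}\}$, let $B_1, \dots, B_k$ be all active bids with $c(B_i) = m$, and let $S = \sum_{i=1}^k v(B_i)$. If $V - S \ge m$, all of $B_1, \dots, B_k$ are refunded in full and removed from the active set. Otherwise, with $q = (V - m)/S$, each $v(B_i)$ is replaced by $(1-q)\, v(B_i)$ (these bids remain active), so that the valuation becomes exactly $m$. The valuation $V$ is recomputed after each iteration. Let $V_s$ denote the valuation at the end of block $s$ (after Step 3). Then for every block $s$ with $t < s \le u$, one has $V_s \ge V_{s-1}$; that is, after the withdrawal lock time $t$ the crowdsale valuation is monotonically non-decreasing, regardless of which bids buyers submit.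
   Context: This models an interactive coin offering smart contract after the ''withdrawal lock'' time $t$ (no voluntary withdrawals are allowed after $t$). A bid's personal cap $c(A)$ is the maximum total sale valuation at which its owner is willing to participate; if the valuation exceeds it, the bid is (fully or partially) refunded by the automatic-withdrawal step described in the claim. Only active bids count toward the valuation $V$. *)

(* Defs.v *)
From HB Require Import structures.
From mathcomp Require Import all_boot all_order all_algebra.
Set Implicit Arguments. Unset Strict Implicit. Unset Printing Implicit Defensive.
Import Order.TTheory GRing.Theory Num.Theory.
Local Open Scope ring_scope.

Definition bid (R : realFieldType) := (R * R)%type.

Definition amount {R : realFieldType} (b : bid R) : R := b.1.
Definition cap {R : realFieldType} (b : bid R) : R := b.2.

Definition valuation {R : realFieldType} (s : seq (bid R)) : R :=
  \sum_(b <- s) amount b.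

Inductive star {T : Type} (r : T -> T -> Prop) : T -> T -> Prop :=
| star_refl x : star r x x
| star_step x y z : r x y -> star r y z -> star r x z.

Definition arrive {R : realFieldType} (s s' : seq (bid R)) : Prop :=
  exists b : bid R, 0 < amount b /\ valuation s < cap b /\ s' = rcons s b.

Definition is_min_cap {R : realFieldType} (s : seq (bid R)) (m : R) : Prop :=
  (m \in map cap s) /\ (forall b, b \in s -> m <= cap b).

Definition withdraw_iter {R : realFieldType} (s s' : seq (bid R)) : Prop :=
  (exists2 B, B \in s & cap B < valuation s) /\
  exists m, is_min_cap s m /\
    let S := \sum_(b <- s | cap b == m) amount b in
    let V := valuation s in
    if m <= V - S then
      s' = [seq b <- s | cap b != m]
    else
      let q := (V - m) / S in
      s' = [seq (if cap b == m then ((1 - q) * amount b, cap b) else b) | b <- s].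

Definition stable {R : realFieldType} (s : seq (bid R)) : Prop :=
  forall B, B \in s -> valuation s <= cap B.

Definition block {R : realFieldType} (s0 s2 : seq (bid R)) : Prop :=
  exists s1, star arrive s0 s1 /\ star withdraw_iter s1 s2 /\ stable s2.

Definition valid_state {R : realFieldType} (s : seq (bid R)) : Prop :=
  forall b, b \in s -> 0 < amount b /\ 0 < cap b.

(* Main.v *)
Require Import Defs.
From HB Require Import structures.
From mathcomp Require Import all_boot all_order all_algebra.
Import Order.TTheory GRing.Theory Num.Theory.
Local Open Scope ring_scope.

Definition Inv {R : realFieldType} (V0 : R) (s : seq (bid R)) : Prop :=
  (forall b, b \in s -> V0 <= cap b) /\ V0 <= valuation s.

Lemma arrive_inv (R : realFieldType) (V0 : R) s s' :
  Inv V0 s -> arrive s s' -> Inv V0 s'.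
Proof.
move=> [Hc Hv] [b [Ha [Hb ->]]]; split.
- move=> x; rewrite mem_rcons inE => /orP [/eqP -> | /Hc //].
  exact: le_trans Hv (ltW Hb).
- rewrite /valuation big_rcons /= -/(valuation s).
  apply: le_trans Hv _; rewrite lerDl; exact: ltW.
Qed.

Lemma withdraw_inv (R : realFieldType) (V0 : R) s s' :
  Inv V0 s -> withdraw_iter s s' -> Inv V0 s'.
Proof.
move=> [Hc Hv] [_ [m [[Hm Hmin] H]]].
have Vm : V0 <= m.
  by case/mapP: Hm => b Hb ->; exact: Hc.
move: H => /= H; move: H; set S := \sum_(b <- s | cap b == m) amount b.
have HV : valuation s = S + \sum_(b <- s | cap b != m) amount b.
  by rewrite /valuation (bigID (fun b => cap b == m)).
case: ifP => Hle ->; split.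
- by move=> x; rewrite mem_filter => /andP [_ /Hc].
- rewrite /valuation big_filter.
  have -> : \sum_(b <- s | cap b != m) amount b = valuation s - S.
    by rewrite HV addrAC subrr add0r.
  exact: le_trans Vm Hle.
- move=> x /mapP [b Hb ->]; case: ifP => _ /=; exact: Hc.
- rewrite /valuation big_map.
  set q := (valuation s - m) / S.
  have -> : \sum_(j <- s) amount (if cap j == m then ((1 - q) * amount j, cap j) else j)
     = valuation s - q * S.
    rewrite /valuation /S (bigID (fun b => cap b == m) _ (fun b => amount b)) /=.
    rewrite (bigID (fun b => cap b == m)) /=.
    rewrite (eq_bigr (fun j => (1 - q) * amount j)); last by move=> i /= ->.
    rewrite (eq_bigr (fun j => amount j) (P := fun j => true && (cap j != m))); last first.
      by move=> i /= /negbTE ->.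
    rewrite -big_distrr /= mulrBl mul1r; by rewrite addrAC.
  have [S0|S0] := eqVneq S 0.
    by rewrite S0 mulr0 subr0.
  by rewrite /q mulfVK // opprB addrC subrK.
Qed.

Lemma star_inv (R : realFieldType) (V0 : R) (r : seq (bid R) -> seq (bid R) -> Prop) s s' :
  (forall x y, Inv V0 x -> r x y -> Inv V0 y) -> Inv V0 s -> star r s s' -> Inv V0 s'.
Proof.
move=> Hr Hs H; elim: H Hs => // x y z Hxy _ IH Hx; apply: IH; exact: Hr Hxy.
Qed.

Lemma block_mono (R : realFieldType) (s0 s2 : seq (bid R)) :
  stable s0 -> block s0 s2 -> valuation s0 <= valuation s2.
Proof.
move=> Hst [s1 [H1 [H2 _]]].
have I0 : Inv (valuation s0) s0 by split => // b /Hst.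
have I1 := @star_inv R _ _ _ _ (@arrive_inv R _) I0 H1.
have [] := @star_inv R _ _ _ _ (@withdraw_inv R _) I1 H2 => //.
Qed.

Theorem mainTheorem1 (R : realFieldType) (t u : nat)
    (init : seq (bid R)) (ends : nat -> seq (bid R)) :
  valid_state init ->
  block init (ends t) ->
  (forall s : nat, (t < s)%N -> (s <= u)%N -> block (ends s.-1) (ends s)) ->
  forall s : nat, (t < s)%N -> (s <= u)%N ->
    valuation (ends s.-1) <= valuation (ends s).
Proof.
move=> _ Ht Hs s lts leu.
apply: block_mono; last exact: Hs.
have : (t <= s.-1)%N by case: s lts {leu} => //.
rewrite leq_eqVlt => /orP [/eqP <- | lt].
- by case: Ht => [s1 [_ [_ ?]]].
- have : block (ends s.-1.-1) (ends s.-1).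
    apply: Hs => //; apply: leq_trans leu; exact: leq_pred.
  by case => [s1 [_ [_ ?]]].
Qed.
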